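(* Let $M$ be a finite monoid. (i) Every filtered left $M$-set $A$ is cyclic, i.e. there is $c\in A$ with $A=Mc$; in particular $|A|\le |M|$. (ii) The set $\mathsf F_M$ of isomorphism classes of filtered left $M$-sets (equivalently, of points of the topos of right $M$-sets) is finite.
   Context: A left $M$-set $A$ is filtered if the functor $(-)\otimes_M A$ from right $M$-sets to sets preserves finite limits; equivalently: (F1) $A\neq\emptyset$; (F2) if $m_1,m_2\in M$, $a\in A$ and $m_1a=m_2a$, then there are $m\in M$, $\tilde a\in A$ with $m\tilde a=a$ and $m_1m=m_2m$; (F3) for $a_1,a_2\in A$ there are $m_1,m_2\in M$, $a\in A$ with $m_1a=a_1$, $m_2a=a_2$. *)

(* Defs.v *)
From HB Require Import structures.
From mathcomp Require Import all_boot.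
Set Implicit Arguments. Unset Strict Implicit. Unset Printing Implicit Defensive.

Local Open Scope group_scope.

Record MSet (M : monoidType) := {
  mset_carrier :> Type;
  act : M -> mset_carrier -> mset_carrier;
  act1 : forall a, act 1 a = a;
  actM : forall m n a, act (m * n) a = act m (act n a)
}.
Arguments act {M} _ _ _.

(* Filtered left M-set, via the elementwise conditions (F1)-(F3). *)
Definition filtered (M : monoidType) (A : MSet M) : Prop :=
  [/\ inhabited A,
      (forall (m1 m2 : M) (a : A), act A m1 a = act A m2 a ->
         exists (m : M) (a' : A), act A m a' = a /\ m1 * m = m2 * m)
    & (forall a1 a2 : A, exists (m1 m2 : M) (a : A),
         act A m1 a = a1 /\ act A m2 a = a2)].

Definition mset_iso (M : monoidType) (A B : MSet M) : Prop :=
  exists f : A -> B, bijective f /\ forall (m : M) (a : A), f (act A m a) = act B m (f a).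

Definition finite_monoid (M : monoidType) : Prop :=
  exists s : seq M, forall x : M, x \in s.

(* Main.v *)
Require Import Defs.
From HB Require Import structures.
From Stdlib Require Import Classical ClassicalEpsilon Lia.
From mathcomp Require Import all_boot zify.

Set Implicit Arguments. Unset Strict Implicit. Unset Printing Implicit Defensive.
Local Open Scope group_scope.

Section PartI.
Variables (M : monoidType) (s : seq M) (hs : forall x, x \in s) (A : MSet M).
Definition Ae : Type := mset_carrier A.
Definition eqA (x y : Ae) : bool :=
  if excluded_middle_informative (x = y) then true else false.
Lemma eqAP : Equality.axiom eqA.
Proof. by move=> x y; rewrite /eqA; case: excluded_middle_informative => h; constructor. Qed.
HB.instance Definition _ := hasDecEq.Build Ae eqAP.

Definition img (c : Ae) : seq Ae := undup [seq (act A m c : Ae) | m <- s].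

Lemma img_size c : size (img c) <= size s.
Proof. by rewrite /img (leq_trans (size_undup _)) // size_map. Qed.

Lemma in_img c m : (act A m c : Ae) \in img c.
Proof. by rewrite /img mem_undup; apply/mapP; exists m. Qed.

Lemma grow :
  (forall a1 a2 : A, exists (m1 m2 : M) (a : A), act A m1 a = a1 /\ act A m2 a = a2) ->
  forall c : A, ~ (forall a : A, exists m : M, a = act A m c) ->
  exists d : A, size (img c) < size (img d).
Proof.
move=> F3 c Hn.
have [a Hna] := not_all_ex_not _ _ Hn.
have Hna' : forall m, a <> act A m c by move=> m h; apply: Hna; exists m.
have [m1 [m2 [d [h1 h2]]]] := F3 c a.
exists d.
have : size (a :: img c) <= size (img d).
  apply: (@uniq_leq_size Ae (a :: img c) (img d)).
  - rewrite /= undup_uniq andbT; apply/negP; rewrite /img mem_undup => /mapP [m _ hm].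
    exact: (Hna' m hm).
  - move=> x; rewrite inE => /orP [/eqP -> | ]; first by rewrite -h2 in_img.
    rewrite /img mem_undup => /mapP [m _ ->]; rewrite -h1 -actM; exact: in_img.
by [].
Qed.

Lemma gen_exists :
  (forall a1 a2 : A, exists (m1 m2 : M) (a : A), act A m1 a = a1 /\ act A m2 a = a2) ->
  forall k (c : A), size s - size (img c) <= k ->
  exists c : A, forall a : A, exists m : M, a = act A m c.
Proof.
move=> F3; elim=> [|k IH] c hk;
  have [Hall | Hn] := classic (forall a : A, exists m : M, a = act A m c);
  try by exists c.
  have [d hd] := grow F3 Hn.
  move: hk hd (img_size d) (img_size c); lia.
have [d hd] := grow F3 Hn.
apply: (IH d).
move: hk hd (img_size d) (img_size c); lia.
Qed.
End PartI.

Section PartII.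
Variable M : monoidType.

Definition Mself : MSet M :=
  {| mset_carrier := M; act := fun m a => m * a;
     act1 := @mul1g M; actM := fun m n a => esym (mulgA m n a) |}.

Lemma Mself_filtered : filtered Mself.
Proof.
split.
- by constructor; exact: (1 : M).
- move=> m1 m2 a /= h; exists a, (1 : M); split => //=; exact: mulg1.
- move=> a1 a2; exists a1, a2, (1 : M); split => /=; exact: mulg1.
Qed.

Section Cset.
Variables (rho : M -> M) (H1 : forall m, rho (rho m) = rho m)
  (H2 : forall n m, rho (n * rho m) = rho (n * m)).
Definition Ccar := {x : M | rho x == x}.
Lemma CactP n (x : Ccar) : rho (rho (n * val x)) == rho (n * val x).
Proof. by apply/eqP; apply: H1. Qed.
Definition Cact (n : M) (x : Ccar) : Ccar := exist _ (rho (n * val x)) (CactP n x).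
Lemma Cact1 x : Cact 1 x = x.
Proof. by apply: val_inj => /=; rewrite mul1g; apply/eqP; case: x. Qed.
Lemma CactM m n x : Cact (m * n) x = Cact m (Cact n x).
Proof. by apply: val_inj => /=; rewrite H2 mulgA. Qed.
Definition Cset : MSet M :=
  {| mset_carrier := Ccar; act := Cact; act1 := Cact1; actM := CactM |}.
End Cset.

Lemma filtered_transfer (A B : MSet M) (g : A -> B) (h : B -> A) :
  cancel g h -> cancel h g -> (forall m a, g (act A m a) = act B m (g a)) ->
  filtered A -> filtered B.
Proof.
move=> gK hK gE [[a0] F2 F3]; split.
- by constructor; exact: g a0.
- move=> m1 m2 b e.
  have e' : act A m1 (h b) = act A m2 (h b).
    by apply: (can_inj gK); rewrite !gE hK.
  have [m [a' [ha hm]]] := F2 _ _ _ e'.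
  by exists m, (g a'); split => //; rewrite -gE ha hK.
- move=> b1 b2; have [m1 [m2 [a [e1 e2]]]] := F3 (h b1) (h b2).
  by exists m1, m2, (g a); rewrite -!gE e1 e2 !hK.
Qed.

Section Iso.
Variables (A : MSet M) (c : A) (f : A -> M) (fK : forall a, act A (f a) c = a)
  (rho : M -> M) (rhoE : forall m, rho m = f (act A m c)).
Lemma rhoH1 m : rho (rho m) = rho m.
Proof. by rewrite !rhoE fK. Qed.
Lemma rhoH2 n m : rho (n * rho m) = rho (n * m).
Proof. by rewrite !rhoE !actM fK. Qed.
Variables (H1 : forall m, rho (rho m) = rho m)
  (H2 : forall n m, rho (n * rho m) = rho (n * m)).
Lemma psiP a : rho (f a) == f a.
Proof. by rewrite rhoE fK. Qed.
Definition psi (a : A) : Cset H1 H2 := exist _ (f a) (psiP a).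
Definition phi (x : Cset H1 H2) : A := act A (val x) c.
Lemma psiK : cancel psi phi.
Proof. by move=> a; rewrite /phi /= fK. Qed.
Lemma phiK : cancel phi psi.
Proof. by move=> [x hx]; apply: val_inj => /=; rewrite -rhoE; apply/eqP. Qed.
Lemma psiE m a : psi (act A m a) = act (Cset H1 H2) m (psi a).
Proof. by apply: val_inj => /=; rewrite rhoE actM fK. Qed.
Lemma Cset_iso : mset_iso A (Cset H1 H2).
Proof. exists psi; split; last exact: psiE. by exists phi; [exact: psiK | exact: phiK]. Qed.
Lemma Cset_filtered : filtered A -> filtered (Cset H1 H2).
Proof. apply: filtered_transfer psiK phiK psiE. Qed.
End Iso.

Variables (s : seq M) (hs : forall x, x \in s).
Definition T := seq_sub s.
Definition toS (m : M) : T := SeqSub (hs m).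
Definition Idx := {ffun T -> T}.
Definition rhoOf (g : Idx) (m : M) : M := ssval (g (toS m)).

Definition Fg (g : Idx) : MSet M :=
  match excluded_middle_informative
    ((forall m, rhoOf g (rhoOf g m) = rhoOf g m) /\
     (forall n m, rhoOf g (n * rhoOf g m) = rhoOf g (n * m))) with
  | left H => if excluded_middle_informative (filtered (Cset (proj1 H) (proj2 H)))
              then Cset (proj1 H) (proj2 H) else Mself
  | right _ => Mself
  end.

Lemma Fg_filtered g : filtered (Fg g).
Proof.
rewrite /Fg; case: excluded_middle_informative => [H|_]; last exact: Mself_filtered.
by destruct (excluded_middle_informative (filtered (Cset (proj1 H) (proj2 H)))); [|exact: Mself_filtered].
Qed.

Lemma gen_choice (A : MSet M) : filtered A ->
  exists (c : A) (f : A -> M), forall a, act A (f a) c = a.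
Proof.
case=> [[a0] _ F3].
have [c hc] := @gen_exists M s hs A F3 (size s) a0 (leq_subr _ _).
exists c, (fun a => proj1_sig (constructive_indefinite_description _ (hc a))).
by move=> a; rewrite -(proj2_sig (constructive_indefinite_description _ (hc a))).
Qed.

Lemma Fg_iso (A : MSet M) : filtered A -> exists g, mset_iso A (Fg g).
Proof.
move=> fA; have [c [f fK]] := gen_choice fA.
pose g : Idx := [ffun t => toS (f (act A (ssval t) c))].
have rhoE : forall m, rhoOf g m = f (act A m c) by move=> m; rewrite /rhoOf ffunE.
exists g; rewrite /Fg; case: excluded_middle_informative => [H|nH]; last first.
  by case: nH; split; [move=> m; exact: (rhoH1 fK rhoE) | move=> n m; exact: (rhoH2 fK rhoE)].
match goal with |- context [excluded_middle_informative ?P] => destruct (excluded_middle_informative P) as [hF|nF] end; simpl; first exact: (Cset_iso fK rhoE).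
by case: nF; exact: (Cset_filtered fK rhoE _ _ fA).
Qed.
End PartII.

Theorem theorem3p5 (M : monoidType) (finM : finite_monoid M) :
  (forall A : MSet M, filtered A ->
     (exists c : A, forall a : A, exists m : M, a = act A m c)
     /\ (exists f : A -> M, injective f))
  /\
  (exists (n : nat) (F : 'I_n -> MSet M),
     (forall i, filtered (F i)) /\
     forall A : MSet M, filtered A -> exists i : 'I_n, mset_iso A (F i)).
Proof.
case: finM => s hs; split.
  move=> A fA; have [c [f fK]] := gen_choice hs fA; split.
    by exists c => a; exists (f a); rewrite fK.
  by exists f; apply: (@can_inj _ _ f (fun m => act A m c) fK).
exists #|Idx s|, (fun i : 'I_#|Idx s| => Fg hs (enum_val i)); split.
  by move=> i; exact: Fg_filtered.
move=> A fA; have [g hg] := Fg_iso hs fA.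
by exists (enum_rank g); rewrite enum_rankK.
Qed.
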